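(* Let $\alpha$ be a graph function on a strongly connected digraph $G$ and let $v$ be a vertex with $\alpha_v^{\text{in}}\neq\alpha_v^{\text{out}}$. If $\bar\alpha$ is the graph function obtained from $\alpha$ by the balancing operation at $v$, then $\bar\alpha<\alpha$ in the order defined below.
   Context: $G$ is a strongly connected directed graph (self-loops allowed); a graph function assigns a real weight $\alpha_{uv}$ to each edge. $\alpha_v^{\text{in}}=\max_{u:(u,v)\in G}\alpha_{uv}$, $\alpha_v^{\text{out}}=\max_{w:(v,w)\in G}\alpha_{vw}$. The balancing operation at $v$ adds $(\alpha_v^{\text{out}}-\alpha_v^{\text{in}})/2$ to each $\alpha_{uv}$ with $u\ne v$, subtracts it from each $\alpha_{vw}$ with $w\ne v$, and leaves a self-loop unchanged. For real $w$, $G_\alpha^w$ is the subgraph of edges $(u,v)$ with $\alpha_{uv}\ge w$, isolated vertices removed (a vertex with a self-loop is not isolated). For two graph functions $\alpha,\gamma$ on $G$, $\alpha<\gamma$ means: for the largest $w$ with $G_\alpha^w\ne G_\gamma^w$, one has $G_\alpha^w\subset G_\gamma^w$. *)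

(* Defs.v *)
From mathcomp Require Import all_boot all_order all_algebra.
Set Implicit Arguments. Unset Strict Implicit. Unset Printing Implicit Defensive.
Import Order.TTheory GRing.Theory Num.Theory.
Local Open Scope ring_scope.

(* A directed graph (self-loops allowed) is a finite vertex type V with an edge
   relation E : rel V.  A graph function is alpha : V -> V -> R; only its values
   alpha u v on edges E u v are relevant. *)

Definition strongly_connected (V : finType) (E : rel V) : Prop :=
  forall x y : V, connect E x y.

(* maximum of a nonempty sequence (value irrelevant on the empty sequence) *)
Definition seqmax (R : realDomainType) (s : seq R) : R :=
  foldr Num.max (head 0 s) s.

Definition alpha_in (R : realDomainType) (V : finType) (E : rel V)
  (alpha : V -> V -> R) (v : V) : R :=
  seqmax [seq alpha u v | u <- enum V & E u v].

Definition alpha_out (R : realDomainType) (V : finType) (E : rel V)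
  (alpha : V -> V -> R) (v : V) : R :=
  seqmax [seq alpha v w | w <- enum V & E v w].

Definition balance (R : realFieldType) (V : finType) (E : rel V)
  (alpha : V -> V -> R) (v : V) : V -> V -> R :=
  let d := (alpha_out E alpha v - alpha_in E alpha v) / 2 in
  fun x y =>
    if (y == v) && (x != v) then alpha x y + d
    else if (x == v) && (y != v) then alpha x y - d
    else alpha x y.

Definition subgraph (V : finType) : Type := ({set V} * {set V * V})%type.

(* G_alpha^w : edges (u,v) of G with alpha_{uv} >= w, isolated vertices removed *)
Definition level_edges (R : realDomainType) (V : finType) (E : rel V)
  (alpha : V -> V -> R) (w : R) : {set V * V} :=
  [set e : V * V | E e.1 e.2 && (w <= alpha e.1 e.2)].

Definition level_graph (R : realDomainType) (V : finType) (E : rel V)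
  (alpha : V -> V -> R) (w : R) : subgraph V :=
  let Es := level_edges E alpha w in
  ([set x : V | [exists y : V, ((x, y) \in Es) || ((y, x) \in Es)]], Es).

Definition subgraph_le (V : finType) (H K : subgraph V) : bool :=
  (H.1 \subset K.1) && (H.2 \subset K.2).

Definition subgraph_lt (V : finType) (H K : subgraph V) : bool :=
  subgraph_le H K && (H != K).

(* alpha < gamma : for the largest w with G_alpha^w <> G_gamma^w,
   G_alpha^w is a (proper) subgraph of G_gamma^w. *)
Definition gf_lt (R : realDomainType) (V : finType) (E : rel V)
  (alpha gamma : V -> V -> R) : Prop :=
  exists w : R,
    [/\ level_graph E alpha w <> level_graph E gamma w,
        (forall w' : R, w < w' -> level_graph E alpha w' = level_graph E gamma w') &
        subgraph_lt (level_graph E alpha w) (level_graph E gamma w)].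

(* Main.v *)
Require Import Defs.
From mathcomp Require Import all_boot all_order all_algebra.
From mathcomp Require Import lra.
Import Order.TTheory GRing.Theory Num.Theory.
Local Open Scope ring_scope.

Lemma foldr_max_prop (R : realDomainType) (a : R) (t : seq R) :
  [/\ a <= foldr Num.max a t, (forall x, x \in t -> x <= foldr Num.max a t)
    & (foldr Num.max a t = a \/ foldr Num.max a t \in t)].
Proof.
elim: t => [|b t [H1 H2 H3]] /=; first by split => //; left.
split.
- by rewrite le_max H1 orbT.
- move=> x; rewrite inE => /orP [/eqP -> | xt]; first by rewrite le_max lexx.
  by rewrite le_max H2 ?orbT.
- case: (leP b (foldr Num.max a t)) => Hb.
  + case: H3 => [->|H]; [by left | by right; rewrite inE H orbT].
  + by right; rewrite inE eqxx.
Qed.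

Lemma seqmax_ge (R : realDomainType) (s : seq R) x : x \in s -> x <= seqmax s.
Proof.
case: s => [//|a t]; rewrite /seqmax /= => Hx.
have [H1 H2 _] := @foldr_max_prop _ a t.
move: Hx; rewrite inE => /orP [/eqP ->|xt]; first by rewrite le_max lexx.
by rewrite le_max H2 ?orbT.
Qed.

Lemma seqmax_in (R : realDomainType) (s : seq R) : s != [::] -> seqmax s \in s.
Proof.
case: s => [//|a t] _; rewrite /seqmax /=.
have [H1 H2 H3] := @foldr_max_prop _ a t.
case: (leP a (foldr Num.max a t)) => Ha.
- case: H3 => [->|H]; first by rewrite inE eqxx.
  by rewrite inE H orbT.
- by rewrite inE eqxx.
Qed.

Theorem lemma8 (R : realFieldType) (V : finType) (E : rel V)
  (alpha : V -> V -> R) (v : V) :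
  strongly_connected E ->
  alpha_in E alpha v != alpha_out E alpha v ->
  gf_lt E (balance E alpha v) alpha.
Proof.
move=> Hsc Hne.
set ai := alpha_in E alpha v; set ao := alpha_out E alpha v.
have inle : forall u, E u v -> alpha u v <= ai.
  move=> u Hu; apply: seqmax_ge; apply: map_f.
  by rewrite mem_filter mem_enum Hu.
have outle : forall w, E v w -> alpha v w <= ao.
  move=> w Hw; apply: seqmax_ge; apply: map_f.
  by rewrite mem_filter mem_enum Hw.
have hout : exists y, E v y.
  case: (pickP (fun y => E v y)) => [y Hy|H0]; first by exists y.
  case: (pickP (fun u => E u v)) => [u Hu|H1].
    have uv : u != v by apply: contraTneq Hu => ->; rewrite H0.
    have := Hsc v u; case/connectP => p Hp Hl.
    case: p Hp Hl => [_ Hl|y p]; first by rewrite Hl eqxx in uv.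
    by rewrite /= H0.
  exfalso; move: Hne; rewrite /ai /ao /alpha_in /alpha_out.
  have -> : [seq alpha u v | u <- enum V & E u v] = [::].
    by rewrite (eq_filter H1) filter_pred0.
  have -> : [seq alpha v w | w <- enum V & E v w] = [::].
    by rewrite (eq_filter H0) filter_pred0.
  by rewrite eqxx.
have hin : exists y, E y v.
  case: (pickP (fun u => E u v)) => [u Hu|H1]; first by exists u.
  case: hout => u Hu.
  have uv : u != v by apply: contraTneq Hu => ->; rewrite H1.
  have : connect [rel x y | E y x] v u by rewrite connect_rev /=; exact: Hsc.
  case/connectP => p Hp Hl.
  case: p Hp Hl => [_ Hl|y p]; first by rewrite Hl eqxx in uv.
  by rewrite /= H1.
have aiin : exists2 u, E u v & alpha u v = ai.
  have : ai \in [seq alpha u v | u <- enum V & E u v].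
    apply: seqmax_in; case: hin => y Hy.
    apply/eqP => H; have : alpha y v \in [seq alpha u v | u <- enum V & E u v].
      by apply: map_f; rewrite mem_filter mem_enum Hy.
    by rewrite H.
  by case/mapP => u; rewrite mem_filter => /andP [Hu _] ->; exists u.
have aoin : exists2 w, E v w & alpha v w = ao.
  have : ao \in [seq alpha v w | w <- enum V & E v w].
    apply: seqmax_in; case: hout => y Hy.
    apply/eqP => H; have : alpha v y \in [seq alpha v w | w <- enum V & E v w].
      by apply: map_f; rewrite mem_filter mem_enum Hy.
    by rewrite H.
  by case/mapP => u; rewrite mem_filter => /andP [Hu _] ->; exists u.
set bal := balance E alpha v.
set M := Num.max ai ao.
have Hbal : forall x y, bal x y =
    if (y == v) && (x != v) then alpha x y + (ao - ai) / 2
    else if (x == v) && (y != v) then alpha x y - (ao - ai) / 2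
    else alpha x y by [].
have edge : forall x y, E x y -> bal x y = alpha x y \/ (bal x y < M /\ alpha x y <= M).
  move=> x y Exy; rewrite Hbal.
  case: (eqVneq y v) => [yv|yv]; case: (eqVneq x v) => [xv|xv] /=; try by left.
  - subst y; right; have := inle x Exy; rewrite /M.
    move: Hne; case: (ltgtP ai ao) => // Hc _ Ha.
    + split; lra.
    + split; lra.
  - subst x; right; have := outle y Exy; rewrite /M.
    move: Hne; case: (ltgtP ai ao) => // Hc _ Ha.
    + split; lra.
    + split; lra.
have wit : exists x y, [/\ E x y, alpha x y = M & bal x y < M].
  move: Hne; rewrite /M; case: (ltgtP ai ao) => // Hc _.
  - case: aoin => w Hw Hv; exists v, w; split => //.
    have wv : w != v.
      apply: contraTneq Hc => wv; subst w; rewrite -leNgt -Hv; exact: inle.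
    rewrite Hbal eqxx (negbTE wv) /=; lra.
  - case: aiin => u Hu Hv; exists u, v; split => //.
    have uv : u != v.
      apply: contraTneq Hc => uv; subst u; rewrite -leNgt -Hv; exact: outle.
    rewrite Hbal eqxx uv /=; lra.
have eqabove : forall w, M < w -> level_edges E bal w = level_edges E alpha w.
  move=> w Hw; apply/setP => -[x y]; rewrite !inE /=.
  case Exy: (E x y) => //=; case: (edge x y Exy) => [->//|[H1 H2]].
  apply/idP/idP => H; lra.
have subat : level_edges E bal M \subset level_edges E alpha M.
  apply/subsetP => -[x y]; rewrite !inE /= => /andP [Exy H].
  rewrite Exy /=; case: (edge x y Exy) => [<-//|[H1 H2]]; lra.
have neat : level_edges E bal M != level_edges E alpha M.
  case: wit => x [y [Exy Ha Hb]]; apply/eqP => /setP /(_ (x, y)).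
  rewrite !inE /= Exy Ha lexx /=; move/idP; rewrite leNgt Hb.
  by move=> H; case: H.
exists M; split.
- by case=> _ H; rewrite H eqxx in neat.
- by move=> w' Hw'; rewrite /level_graph eqabove.
- rewrite /subgraph_lt /subgraph_le /=; apply/andP; split.
  + rewrite subat andbT; apply/subsetP => x; rewrite !inE.
    case/existsP => y H; apply/existsP; exists y.
    by case/orP: H => H; rewrite (subsetP subat _ H) ?orbT.
  + by apply/eqP => -[_ H]; rewrite H eqxx in neat.
Qed.
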